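(* If an iCRS is confluent modulo hypercollapsing subterms, i.e. for all terms $s\sim_{hc}t$ and all $s\twoheadrightarrow s'$, $t\twoheadrightarrow t'$ there are $s'',t''$ with $s'\twoheadrightarrow s''$, $t'\twoheadrightarrow t''$ and $s''\sim_{hc}t''$, then it has the properties NF, UN and UN$^\rightarrow$.
   Context: Infinitary Combinatory Reduction Systems (iCRSs). Fix a signature $\Sigma$ of function symbols of finite arity, variables, and meta-variables of each finite arity. Meta-terms are the possibly infinite trees built from variables $x$, abstractions $[x]s$, $Z(s_1,\dots,s_n)$ for meta-variables $Z$ and $f(s_1,\dots,s_n)$ for $f\in\Sigma$ (metric completion of finite meta-terms modulo $\alpha$-equivalence under $d(s,t)=2^{-k}$, $k$ least depth of difference). Terms have no meta-variables. A rewrite rule $l\to r$: $l$ a finite pattern (meta-variables applied to distinct bound variables) with function symbol at the root, $r$ a meta-term with meta-variables from $l$, both closed, $r$ without infinite chains of nested meta-variable applications. A rewrite step $C[\bar\sigma(l)]\to C[\bar\sigma(r)]$ for a valuation $\bar\sigma$ (meta-variables to substitutes $\underline{\lambda}\vec x.t$, $(\underline{\lambda}\vec x.t)(\vec t)=t[\vec x:=\vec t]$) and one-hole context $C$; $\bar\sigma(l)$ is a redex, collapsing if the right-hand side of its rule has a meta-variable at the root. A transfinite reduction $(s_\beta)_{\beta<\alpha}$ is strongly convergent if $\alpha$ is a successor ordinal and at every limit $\gamma<\alpha$, $s_\beta\to s_\gamma$ and depths of contracted redexes tend to infinity; $s\twoheadrightarrow t$ denotes such a reduction. A term $s$ is hypercollapsing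 if for every $t$ with $s\twoheadrightarrow t$ there is $t'$ with $t\twoheadrightarrow t'$ having a collapsing redex at the root. $s\sim_{hc}t$ if $t$ can be obtained from $s$ by replacing some hypercollapsing subterms of $s$ by other hypercollapsing terms. A normal form is a term containing no redex. Let $\mathrel{(\twoheadleftarrow\cdot\twoheadrightarrow)^*}$ be the reflexive, symmetric, transitive closure of $\twoheadrightarrow$. NF: $s\mathrel{(\twoheadleftarrow\cdot\twoheadrightarrow)^*}t$ with $t$ a normal form implies $s\twoheadrightarrow t$. UN: $s\mathrel{(\twoheadleftarrow\cdot\twoheadrightarrow)^*}t$ with $s,t$ normal forms implies $s=t$. UN$^\rightarrow$: $t\twoheadleftarrow s\twoheadrightarrow t'$ with $t,t'$ normal forms implies $t=t'$. *)

(* Defs.v *)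
From mathcomp Require Import all_boot.
From Stdlib Require Import Relations.Relation_Operators.

Set Implicit Arguments.
Unset Strict Implicit.
Unset Printing Implicit Defensive.

(* Meta-terms are possibly infinite trees, represented as
   partial labelling functions on positions (sequences of child indices).
   Alpha-equivalence is handled by de Bruijn indices: [LAbs] is the
   abstraction [x]_ (arity 1) and [LBVar j] refers to the (j+1)-th enclosing
   abstraction (indices pointing outside the tree are "dangling", i.e. refer
   to binders of the surrounding context).  [LFVar x] are free variables,
   [LMVar Z k] the meta-variable named Z of arity k. *)

Section ICRS.
Variable F : Type.
Variable ar : F -> nat.

Inductive label : Type :=
| LFun of F
| LAbs
| LBVar of nat
| LFVar of nat
| LMVar of nat & nat.

Definition arity (l : label) : nat :=
  match l with LFun f => ar f | LAbs => 1%N | LMVar _ k => k | _ => 0%N end.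

Definition tree := seq nat -> option label.

Definition wf_tree (t : tree) : Prop :=
  t [::] <> None /\
  forall p i, t (rcons p i) <> None <-> exists l, t p = Some l /\ (i < arity l)%N.

Definition is_abs (o : option label) : bool :=
  if o is Some LAbs then true else false.
Definition is_mvar (o : option label) : bool :=
  if o is Some (LMVar _ _) then true else false.

Definition is_term (t : tree) : Prop := wf_tree t /\ forall q, ~~ is_mvar (t q).

Definition absdepth (t : tree) (q : seq nat) : nat :=
  count (fun i => is_abs (t (take i q))) (iota 0 (size q)).

Definition subterm (t : tree) (p : seq nat) : tree := fun q => t (p ++ q).

Definition replace (s : tree) (p : seq nat) (u : tree) : tree := fun q =>
  if take (size p) q == p then u (drop (size p) q) else s q.

Definition shift (a : nat) (t : tree) : tree := fun q =>
  match t q with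
  | Some (LBVar j) => if (absdepth t q <= j)%N then Some (LBVar (j + a)) else Some (LBVar j)
  | o => o
  end.

(* in a substitute body of arity n, a dangling index a+k (k<n, a = local
   binder depth) denotes the k-th bound variable of the substitute *)
Definition param_at (n : nat) (body : tree) (q : seq nat) : option nat :=
  match body q with
  | Some (LBVar j) =>
      let a := absdepth body q in
      if (a <= j)%N && (j < a + n)%N then Some (j - a)%N else None
  | _ => None
  end.

(* (λ x_0..x_{n-1}. body)(args), placed under d further binders (so the
   remaining dangling indices of body are lowered by n and raised by d) *)
Definition inst (n d : nat) (body : tree) (args : nat -> tree) : tree := fun q =>
  let i := find (fun i => isSome (param_at n body (take i q))) (iota 0 (size q).+1) in
  if (i <= size q)%N then
    match param_at n body (take i q) with
    | Some k => shift (absdepth body (take i q)) (args k) (drop i q)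
    | None => None
    end
  else
    match body q with
    | Some (LBVar j) =>
        if (absdepth body q <= j)%N then Some (LBVar (j - n + d)) else Some (LBVar j)
    | o => o
    end.

(* valuations: meta-variable (name Z, arity k) |-> substitute body *)
Definition valuation := nat -> nat -> tree.
Definition valid_val (s : valuation) : Prop := forall Z k, is_term (s Z k).

Definition outermost_mvar (r : tree) (p q1 : seq nat) (Z k : nat) : Prop :=
  r (p ++ q1) = Some (LMVar Z k) /\
  forall i, (i < size q1)%N -> ~~ is_mvar (r (p ++ take i q1)).

(* u = σ(r): V p is σ applied to the sub-meta-term of r at p *)
Definition valapp (sg : valuation) (r u : tree) : Prop :=
  exists V : seq nat -> tree, V [::] = u /\
    forall p,
      (forall q1 q2 Z k, outermost_mvar r p q1 Z k ->
         V p (q1 ++ q2) =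
         inst k (absdepth r (p ++ q1)) (sg Z k) (fun j => V (p ++ rcons q1 j)) q2) /\
      (forall q, (forall i, (i <= size q)%N -> ~~ is_mvar (r (p ++ take i q))) ->
         V p q = r (p ++ q)).

Definition finite_tree (t : tree) : Prop :=
  exists N, forall q, (N < size q)%N -> t q = None.

Definition closed_mt (t : tree) : Prop :=
  (forall q j, t q = Some (LBVar j) -> (j < absdepth t q)%N) /\
  (forall q x, t q <> Some (LFVar x)).

Definition pattern (l : tree) : Prop :=
  forall q Z k, l q = Some (LMVar Z k) ->
    (forall j, (j < k)%N -> exists b, l (rcons q j) = Some (LBVar b)) /\
    (forall j1 j2 b, (j1 < k)%N -> (j2 < k)%N ->
       l (rcons q j1) = Some (LBVar b) -> l (rcons q j2) = Some (LBVar b) -> j1 = j2).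

Definition no_infinite_mvar_chain (r : tree) : Prop :=
  forall b : nat -> nat, exists N, forall n, (N <= n)%N -> ~~ is_mvar (r (mkseq b n)).

Definition rule_ok (l r : tree) : Prop :=
  wf_tree l /\ wf_tree r /\ finite_tree l /\ pattern l /\
  (exists f, l [::] = Some (LFun f)) /\
  closed_mt l /\ closed_mt r /\
  (forall q Z k, r q = Some (LMVar Z k) -> exists q', l q' = Some (LMVar Z k)) /\
  no_infinite_mvar_chain r.

Definition iCRS (R : tree -> tree -> Prop) : Prop := forall l r, R l r -> rule_ok l r.

Variable R : tree -> tree -> Prop.

Definition redex (t : tree) : Prop :=
  exists l r sg, R l r /\ valid_val sg /\ valapp sg l t.

Definition collapsing_root (t : tree) : Prop :=
  exists l r sg Z k, R l r /\ valid_val sg /\ r [::] = Some (LMVar Z k) /\ valapp sg l t.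

Definition step (s t : tree) (d : nat) : Prop :=
  is_term s /\ is_term t /\
  exists p l r sg u, size p = d /\ R l r /\ valid_val sg /\
    valapp sg l (subterm s p) /\ valapp sg r u /\ t = replace s p u.

Definition agree (n : nat) (s t : tree) : Prop :=
  forall q, (size q < n)%N -> s q = t q.

(* strongly convergent reduction s ->> t: indexed by a well-ordered type
   with a least element i0 and a greatest element top (successor length) *)
Definition red (s t : tree) : Prop :=
  exists (I : Type) (lt : I -> I -> Prop) (i0 top : I) (S : I -> tree) (D : I -> nat),
    (forall i, ~ lt i i) /\
    (forall i j k, lt i j -> lt j k -> lt i k) /\
    (forall i j, lt i j \/ i = j \/ lt j i) /\
    well_founded lt /\
    (forall i, ~ lt i i0) /\ (forall i, ~ lt top i) /\
    S i0 = s /\ S top = t /\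
    (forall i, is_term (S i)) /\
    (forall i j, lt i j -> (forall k, ~ (lt i k /\ lt k j)) -> step (S i) (S j) (D i)) /\
    (forall g, lt i0 g -> (forall i, lt i g -> exists k, lt i k /\ lt k g) ->
       forall n, exists b, lt b g /\
         forall c, ~ lt c b -> lt c g -> agree n (S c) (S g) /\ (n <= D c)%N).

Definition hypercollapsing (s : tree) : Prop :=
  is_term s /\ forall t, red s t -> exists t', red t t' /\ collapsing_root t'.

Definition hc_equiv (s t : tree) : Prop :=
  is_term s /\ is_term t /\
  exists P : seq nat -> Prop,
    (forall p p' q, P p -> P p' -> p' = p ++ q -> q = [::]) /\
    (forall p, P p -> hypercollapsing (subterm s p) /\ hypercollapsing (subterm t p)) /\
    (forall q, (forall p q', P p -> q <> p ++ q') -> s q = t q).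

Definition normal_form (t : tree) : Prop :=
  is_term t /\ forall p, ~ redex (subterm t p).

Definition conv : tree -> tree -> Prop := clos_refl_sym_trans tree red.

Definition CR_mod_hc : Prop :=
  forall s t s' t', hc_equiv s t -> red s s' -> red t t' ->
    exists s'' t'', red s' s'' /\ red t' t'' /\ hc_equiv s'' t''.

Definition NF_prop : Prop :=
  forall s t, conv s t -> normal_form t -> red s t.

Definition UN_prop : Prop :=
  forall s t, conv s t -> normal_form s -> normal_form t -> s = t.

Definition UN_arrow : Prop :=
  forall s t t', red s t -> red s t' -> normal_form t -> normal_form t' -> t = t'.

End ICRS.

(* Main.v *)
Require Import Defs.
From mathcomp Require Import all_boot.
From Stdlib Require Import Relations.Relation_Operators FunctionalExtensionality ProofIrrelevance Classical.

Set Implicit Arguments.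
Section Aux.
Variable F : Type.
Variable ar : F -> nat.
Variable R : tree F -> tree F -> Prop.

Lemma red_term s t : red ar R s t -> is_term ar s /\ is_term ar t.
Proof.
move=> [I [lt [i0 [top [S [D [_ [_ [_ [_ [_ [_ [HS0 [HST [Hterm _]]]]]]]]]]]]]]].
by rewrite -HS0 -HST.
Qed.

Lemma red_refl s : is_term ar s -> red ar R s s.
Proof.
move=> hs.
exists unit, (fun _ _ => False), tt, tt, (fun _ => s), (fun _ => 0%N).
split; first by move=> _ [].
split; first by move=> _ _ _ [].
split; first by case; case; right; left.
split; first by move=> x; constructor => y [].
split; first by move=> _ [].
split; first by move=> _ [].
split; first by [].
split; first by [].
split; first by move=> _.
split; first by move=> _ _ [].
by move=> _ [].
Qed.

Lemma nf_red s t : (forall p, ~ redex ar R (subterm s p)) -> red ar R s t -> t = s.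
Proof.
move=> hnf [I [lt [i0 [top [S [D [irr [tr [tri [wf [min [max [HS0 [HST [Hterm [Hstep _]]]]]]]]]]]]]]]].
case: (tri i0 top) => [h|[e|h]]; last by exfalso; exact: min h.
- have hm : forall j, lt i0 j -> exists m, lt i0 m /\ forall k, lt i0 k -> ~ lt k m.
    move=> j; induction j as [j IH] using (well_founded_ind wf) => hj.
    case: (classic (exists k, lt i0 k /\ lt k j)) => [[k [h1 h2]]|nk].
    + exact: (IH k h2 h1).
    + exists j; split => // k h1 h2; apply: nk; exists k; auto.
  case: (hm top h) => m [h1 h2].
  have := Hstep i0 m h1 (fun k hk => h2 k hk.1 hk.2).
  move=> [_ [_ [p [l [r [sg [u [_ [Rlr [vs [va _]]]]]]]]]]].
  exfalso; apply: (hnf p); exists l, r, sg; split => //; rewrite -HS0; split => //.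
- by rewrite -HST -HS0 e.
Qed.

Lemma nf_nohc t : normal_form ar R t -> forall p, ~ hypercollapsing ar R (subterm t p).
Proof.
move=> [tt hnf] p [hu hc].
case: (hc _ (red_refl hu)) => t' [h1 h2].
have e : t' = subterm t p.
  apply: nf_red h1 => q.
  have -> : subterm (subterm t p) q = subterm t (p ++ q).
    by apply: functional_extensionality => x; rewrite /subterm catA.
  exact: hnf.
subst t'.
case: h2 => l [r [sg [Z [k [Rlr [vs [_ va]]]]]]].
apply: (hnf p); exists l, r, sg; split => //.
Qed.

Lemma hc_nf x t : hc_equiv ar R x t -> normal_form ar R t -> x = t.
Proof.
move=> [_ [_ [P [_ [HP Heq]]]]] nft.
apply: functional_extensionality => q; apply: Heq => p q' hp _.
exact: (nf_nohc nft (HP p hp).2).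
Qed.

Lemma hc_refl x : is_term ar x -> hc_equiv ar R x x.
Proof.
move=> hx; split => //; split => //; exists (fun _ => False); split => //.
Qed.

Lemma red_trans s u t : red ar R s u -> red ar R u t -> red ar R s t.
Proof.
move=> [I1 [lt1 [a1 [top1 [S1 [D1 [irr1 [tr1 [tri1 [wf1 [min1 [max1 [S1a [S1t [term1 [step1 lim1]]]]]]]]]]]]]]]].
have [Ha|Ha] : a1 = top1 \/ lt1 a1 top1.
  by case: (tri1 a1 top1) => [|[|h]]; auto; exfalso; exact: min1 h.
  by subst a1; rewrite S1a in S1t; subst u.
move=> [I2 [lt2 [a2 [top2 [S2 [D2 [irr2 [tr2 [tri2 [wf2 [min2 [max2 [S2a [S2t [term2 [step2 lim2]]]]]]]]]]]]]]]].
pose J := {i : I1 | lt1 i top1}.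
have eqJ : forall x y : J, proj1_sig x = proj1_sig y -> x = y.
  move=> [x hx] [y hy] /= e; subst y; by rewrite (proof_irrelevance _ hx hy).
pose ltI := fun (x y : (J + I2)%type) => match x, y with
  | inl i, inl j => lt1 (proj1_sig i) (proj1_sig j)
  | inl _, inr _ => True
  | inr _, inl _ => False
  | inr i, inr j => lt2 i j end.
exists (J + I2)%type, ltI, (inl (exist _ a1 Ha)), (inr top2),
  (fun x => match x with inl i => S1 (proj1_sig i) | inr j => S2 j end),
  (fun x => match x with inl i => D1 (proj1_sig i) | inr j => D2 j end).
split. by case=> [[i hi]|j] /=; [apply irr1|apply irr2].
split. case=> [[i hi]|i] [[j hj]|j] [[k hk]|k] //=; [apply tr1|apply tr2].
split. case=> [[i hi]|i] [[j hj]|j] /=.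
  - case: (tri1 i j) => [h|[e|h]]; [left|right;left|right;right] => //.
    by congr inl; apply: eqJ.
  - by left.
  - by right; right.
  - case: (tri2 i j) => [h|[e|h]]; [left|right;left|right;right] => //.
    by subst.
split.
  have accJ : forall i (hi : lt1 i top1), Acc ltI (@inl J I2 (exist _ i hi)).
    move=> i; induction i as [i IH] using (well_founded_ind wf1) => hi.
    constructor; case=> [[k hk]|k] /= hki; [exact: IH|case: hki].
  have accI2 : forall j : I2, Acc ltI (@inr J I2 j).
    move=> j; induction j as [j IH] using (well_founded_ind wf2).
    constructor; case=> [[k hk]|k] /= h; [exact: accJ|exact: IH].
  case=> [[i hi]|j]; [exact: accJ|exact: accI2].
split. case=> [[i hi]|j] //=; exact: min1.
split. case=> [[i hi]|j] //=; exact: max2.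
split. exact S1a.
split. exact S2t.
split. by case=> [[i hi]|j] /=.
split.
  case=> [[i hi]|i] [[j hj]|j] //= hij adj.
  - apply: step1 => // k [h1 h2].
    apply: (adj (inl (exist _ k (tr1 _ _ _ h2 hj)))); simpl; auto.
  - have ej : j = a2.
      case: (tri2 a2 j) => [h|[e|h]] //.
      + by exfalso; apply: (adj (inr a2)); simpl; auto.
      + by exfalso; exact: (min2 _ h).
    subst j; rewrite S2a -S1t.
    apply: step1 => // k [h1 h2].
    apply: (adj (inl (exist _ k h2))); simpl; auto.
  - apply: step2 => // k [h1 h2]; apply: (adj (inr k)); simpl; auto.
case=> [[g hg]|g] /= ha lim n.
- have lim1' : forall i, lt1 i g -> exists k, lt1 i k /\ lt1 k g.
    move=> i hi. have hit : lt1 i top1 := tr1 _ _ _ hi hg.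
    case: (lim (inl (exist _ i hit)) hi) => [[[k hk]|k] [h1 h2]] //=.
    by exists k.
  case: (lim1 g ha lim1' n) => b [hb H].
  exists (inl (exist _ b (tr1 _ _ _ hb hg))); split => //.
  case=> [[c hc]|c] /= h1 h2 //; exact: H.
- case: (tri2 a2 g) => [hg|[e|hg]]; last by exfalso; exact: min2 hg.
  + have lim2' : forall i, lt2 i g -> exists k, lt2 i k /\ lt2 k g.
      move=> i hi.
      case: (lim (inr i) hi) => [[[k hk]|k] [h1 h2]] //=.
      by exists k.
    case: (lim2 g hg lim2' n) => b [hb H].
    exists (inr b); split => //.
    case=> [[c hc]|c] /= h1 h2; first by exfalso; apply: h1.
    exact: H.
  + subst g.
    have lim1' : forall i, lt1 i top1 -> exists k, lt1 i k /\ lt1 k top1.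
      move=> i hi.
      case: (lim (inl (exist _ i hi)) I) => [[[k hk]|k] [h1 h2]] /=.
      * by exists k.
      * by exfalso; exact: (min2 _ h2).
    case: (lim1 top1 Ha lim1' n) => b [hb H].
    exists (inl (exist _ b hb)); split => //.
    case=> [[c hc]|c] /= h1 h2.
    * rewrite S2a -S1t; exact: H.
    * by exfalso; exact: (min2 _ h2).
Qed.

Hypothesis CR : CR_mod_hc ar R.

Lemma fwd x y t : normal_form ar R t -> red ar R x y -> red ar R x t -> red ar R y t.
Proof.
move=> nft hxy hxt.
have tx := (red_term hxy).1.
case: (CR (hc_refl tx) hxy hxt) => s'' [t'' [h1 [h2 h3]]].
have e : t'' = t := nf_red nft.2 h2.
subst t''.
have e := hc_nf h3 nft.
by subst s''.
Qed.

Lemma conv_iff t : normal_form ar R t -> forall x y, conv ar R x y ->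
  (red ar R x t <-> red ar R y t).
Proof.
move=> nft x y hc; induction hc as [x y hxy| x | x y _ IH | x y z _ IH1 _ IH2].
- split; last by move=> h; exact: red_trans hxy h.
  move=> hxt; exact: fwd nft hxy hxt.
- tauto.
- tauto.
- tauto.
Qed.

End Aux.

Theorem lemma5p4 (F : Type) (ar : F -> nat) (R : tree F -> tree F -> Prop) :
  iCRS ar R -> CR_mod_hc ar R -> NF_prop ar R /\ UN_prop ar R /\ UN_arrow ar R.
Proof.
move=> _ CR.
have NF : NF_prop ar R.
  move=> s t hc nft.
  apply/(conv_iff CR nft hc).
  exact: red_refl nft.1.
split; first exact NF.
split.
- move=> s t hc nfs nft.
  have := NF s t hc nft.
  move/(nf_red nfs.2) => e; by [].
- move=> s t t' hst hst' nft nft'.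
  have ts := (red_term hst).1.
  case: (CR _ _ _ _ (hc_refl R ts) hst hst') => s'' [t'' [h1 [h2 h3]]].
  have e1 : s'' = t := nf_red nft.2 h1.
  have e2 : t'' = t' := nf_red nft'.2 h2.
  subst s'' t''.
  exact: hc_nf h3 nft'.
Qed.
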